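(* Let $R$ be a ring, let $*\in\{l,\emptyset\}$, and let $S\in\mathbb{L}_*(R,\mathfrak{a})$. Let $\overline{R}=R/\mathfrak{a}$, $\pi:R\to\overline{R}$, $r\mapsto\overline{r}=r+\mathfrak{a}$, and $\overline{S}=\pi(S)$. Then: \begin{enumerate} \item $\overline{S}\in\mathrm{Den}_*(\overline{R},0)$. \item The ring $R\langle S^{-1}\rangle$ is $R$-isomorphic to $\overline{S}^{-1}\overline{R}$. \item Let $\mathfrak{b}$ be an ideal of $R$, $\pi^\dagger:R\to R^\dagger=R/\mathfrak{b}$, $r\mapsto r^\dagger=r+\mathfrak{b}$. If $S^\dagger=\pi^\dagger(S)\in\mathrm{Den}_*(R^\dagger,0)$ then $\mathfrak{a}\subseteq\mathfrak{b}$ and the map $\overline{S}^{-1}\overline{R}\to {S^\dagger}^{-1}R^\dagger$, $\overline{s}^{-1}\overline{r}\mapsto {s^\dagger}^{-1}r^\dagger$ is a ring epimorphism with kernel $\overline{S}^{-1}(\mathfrak{b}/\mathfrak{a})=\{\overline{s}^{-1}(b+\mathfrak{a}):s\in S,b\in\mathfrak{b}\}$. So $\mathfrak{a}$ is the least ideal $\mathfrak{c}$ of $R$ such that $(S+\mathfrak{c})/\mathfrak{c}\in\mathrm{Den}_*(R/\mathfrak{c},0)$. \item Let $f:R\to Q$ be a ring homomorphism such that $f(S)\subseteq Q^\times$ and $Q$ is generated by $f(R)$ and $\{f(s)^{-1}:s\in S\}$. Then \begin{enumerate} \item $\mathfrak{a}\subseteq\ker(f)$, the map $\overline{S}^{-1}\overline{R}\to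 Q$, $\overline{s}^{-1}\overline{r}\mapsto f(s)^{-1}f(r)$ is a ring epimorphism with kernel $\overline{S}^{-1}(\ker(f)/\mathfrak{a})$, and $Q=\{f(s)^{-1}f(r):s\in S,r\in R\}$; \item with $\widetilde{R}=R/\ker(f)$ and $\widetilde{\pi}:R\to\widetilde{R}$ the natural map, $\widetilde{S}:=\widetilde{\pi}(S)\in\mathrm{Den}_l(\widetilde{R},0)$ and $\widetilde{S}^{-1}\widetilde{R}\simeq Q$, an $\widetilde{R}$-isomorphism. \end{enumerate} \end{enumerate}
   Context: Rings are associative with $1$; $Q^\times$ is the group of units. A multiplicative set $S\subseteq R$ satisfies $SS\subseteq S$, $1\in S$, $0\notin S$. $R\langle S^{-1}\rangle=R\langle X_S\rangle/I_S$, where $R\langle X_S\rangle$ is the ring freely generated by $R$ and noncommuting indeterminates $x_s$ ($s\in S$) and $I_S$ is the ideal generated by $sx_s-1,x_ss-1$ ($s\in S$); $\mathrm{ass}_R(S)$ is the kernel of $R\to R\langle S^{-1}\rangle$. $S$ is left localizable if $R\langle S^{-1}\rangle\ne0$ and every element of it is $(x_s+I_S)(r+I_S)$ for some $s\in S,r\in R$; right localizable similarly with $(r+I_S)(x_s+I_S)$; localizable if both. $\mathbb{L}_l(R)$, $\mathbb{L}_r(R)$, $\mathbb{L}_\emptyset(R)=\mathbb{L}(R)$ denote these sets, and $\mathbb{L}_*(R,\mathfrak{a})=\{S\in\mathbb{L}_*(R):\mathrm{ass}_R(S)=\mathfrak{a}\}$. A left Ore set is a multiplicative set $S$ with $Sr\cap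 Rs\ne\emptyset$ for all $r\in R,s\in S$; it is a left denominator set if moreover $rs=0$ ($r\in R,s\in S$) implies $tr=0$ for some $t\in S$; right versions are symmetric; a denominator set is left and right. $\mathrm{Den}_*(A,0)$ is the set of $*$ denominator sets of $A$ consisting of regular elements, and $T^{-1}A$ denotes the usual (Ore) localization. For ring homomorphisms $\nu_A:R\to A$, $\nu_B:R\to B$, a homomorphism $f:A\to B$ is an $R$-homomorphism if $\nu_B=f\nu_A$. *)

(* Defs.v *)
From HB Require Import structures.
From mathcomp Require Import all_boot all_order all_algebra.
Set Implicit Arguments. Unset Strict Implicit. Unset Printing Implicit Defensive.
Import GRing.Theory.
Local Open Scope ring_scope.

Definition mult_set (A : pzRingType) (T : A -> Prop) : Prop :=
  [/\ forall x y, T x -> T y -> T (x * y), T 1 & ~ T 0].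

Definition ideal_of (A : pzRingType) (c : A -> Prop) : Prop :=
  [/\ c 0, forall x y, c x -> c y -> c (x - y)
    & forall r x, c x -> c (r * x) /\ c (x * r)].

Definition img (A B : Type) (pi : A -> B) (T : A -> Prop) : B -> Prop :=
  fun y => exists x, T x /\ pi x = y.

Definition surj (A B : Type) (f : A -> B) : Prop := forall y, exists x, f x = y.

(* u is the (two-sided) inverse of x in Q; x \in Q^x iff such u exists *)
Definition is_inverse (Q : pzRingType) (u x : Q) : Prop := u * x = 1 /\ x * u = 1.

Definition subring_closedP (Q : pzRingType) (P : Q -> Prop) : Prop :=
  [/\ P 0, P 1, forall x y, P x -> P y -> P (x - y)
    & forall x y, P x -> P y -> P (x * y)].

Definition ring_generated_by (Q : pzRingType) (G : Q -> Prop) : Prop :=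
  forall P : Q -> Prop, subring_closedP P -> (forall x, G x -> P x) ->
    forall q, P q.

Definition left_ore (A : pzRingType) (T : A -> Prop) : Prop :=
  mult_set T /\
  forall (r s : A), T s -> exists (s' r' : A), T s' /\ s' * r = r' * s.

Definition right_ore (A : pzRingType) (T : A -> Prop) : Prop :=
  mult_set T /\
  forall (r s : A), T s -> exists (s' r' : A), T s' /\ r * s' = s * r'.

Definition left_den (A : pzRingType) (T : A -> Prop) : Prop :=
  left_ore T /\
  forall (r s : A), T s -> r * s = 0 -> exists t, T t /\ t * r = 0.

Definition right_den (A : pzRingType) (T : A -> Prop) : Prop :=
  right_ore T /\
  forall (r s : A), T s -> s * r = 0 -> exists t, T t /\ r * t = 0.

Definition den (A : pzRingType) (T : A -> Prop) : Prop :=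
  left_den T /\ right_den T.

Inductive lstar : Type := star_l | star_empty.

Definition Den (st : lstar) (A : pzRingType) (T : A -> Prop) : Prop :=
  (match st with star_l => left_den T | star_empty => den T end) /\
  (forall s, T s -> GRing.lreg s /\ GRing.rreg s).

(* ---------- the usual (Ore) localization T^{-1}A ----------
   sigma : A -> Q is a left ring of fractions of A w.r.t. T
   (Q "is" T^{-1}A with its canonical map sigma):
   sigma(T) consists of units, every element is sigma(t)^{-1} sigma(a),
   and ker sigma = {a | t a = 0 for some t \in T}. *)
Definition left_fractions (A Q : pzRingType) (T : A -> Prop)
  (sigma : {rmorphism A -> Q}) : Prop :=
  [/\ forall t, T t -> exists u, is_inverse u (sigma t),
      forall q, exists t a u, [/\ T t, is_inverse u (sigma t) & q = u * sigma a]
    & forall a, sigma a = 0 <-> exists t, T t /\ t * a = 0].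

(* ---------- universal localization R<S^{-1}> = R<X_S>/I_S ----------
   Terms of the ring generated by R and noncommuting indeterminates x_s
   (s \in S); [req] is the ring congruence generated by the ring axioms,
   the relations of R (tC is a ring morphism), and s x_s = 1 = x_s s.
   The quotient of rterm by req is R<S^{-1}>. *)
Inductive rterm (R : Type) (S : R -> Prop) : Type :=
| tC of R
| tX of {s : R | S s}
| t0
| t1
| tAdd of rterm S & rterm S
| tOpp of rterm S
| tMul of rterm S & rterm S.

Arguments tC {R S}.
Arguments tX {R S}.
Arguments t0 {R S}.
Arguments t1 {R S}.
Arguments tAdd {R S}.
Arguments tOpp {R S}.
Arguments tMul {R S}.

Inductive req (R : pzRingType) (S : R -> Prop) : rterm S -> rterm S -> Prop :=
| req_refl t : req t t
| req_sym t u : req t u -> req u t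
| req_trans t u v : req t u -> req u v -> req t v
| req_add t t' u u' : req t t' -> req u u' -> req (tAdd t u) (tAdd t' u')
| req_opp t t' : req t t' -> req (tOpp t) (tOpp t')
| req_mul t t' u u' : req t t' -> req u u' -> req (tMul t u) (tMul t' u')
| req_addA t u v : req (tAdd t (tAdd u v)) (tAdd (tAdd t u) v)
| req_addC t u : req (tAdd t u) (tAdd u t)
| req_add0 t : req (tAdd t0 t) t
| req_addN t : req (tAdd (tOpp t) t) t0
| req_mulA t u v : req (tMul t (tMul u v)) (tMul (tMul t u) v)
| req_mul1l t : req (tMul t1 t) t
| req_mul1r t : req (tMul t t1) t
| req_mulDl t u v : req (tMul (tAdd t u) v) (tAdd (tMul t v) (tMul u v))
| req_mulDr t u v : req (tMul t (tAdd u v)) (tAdd (tMul t u) (tMul t v))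
| req_C0 : req (tC 0) t0
| req_C1 : req (tC 1) t1
| req_CD a b : req (tC (a + b)) (tAdd (tC a) (tC b))
| req_CN a : req (tC (- a)) (tOpp (tC a))
| req_CM a b : req (tC (a * b)) (tMul (tC a) (tC b))
| req_sx (s : {s : R | S s}) : req (tMul (tC (sval s)) (tX s)) t1
| req_xs (s : {s : R | S s}) : req (tMul (tX s) (tC (sval s))) t1.

Definition ass (R : pzRingType) (S : R -> Prop) (r : R) : Prop :=
  req (tC r : rterm S) t0.

Definition uloc_nonzero (R : pzRingType) (S : R -> Prop) : Prop :=
  ~ req (t1 : rterm S) t0.

Definition left_localizable (R : pzRingType) (S : R -> Prop) : Prop :=
  [/\ mult_set S, uloc_nonzero S &
      forall t : rterm S, exists s r, req t (tMul (tX s) (tC r))].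

Definition right_localizable (R : pzRingType) (S : R -> Prop) : Prop :=
  [/\ mult_set S, uloc_nonzero S &
      forall t : rterm S, exists s r, req t (tMul (tC r) (tX s))].

Definition in_L (st : lstar) (R : pzRingType) (S : R -> Prop) (a : R -> Prop) : Prop :=
  (match st with
   | star_l => left_localizable S
   | star_empty => left_localizable S /\ right_localizable S end) /\
  (forall r, a r <-> ass S r).

(* g, acting on terms, induces an R-isomorphism R<S^{-1}> -> Q, where Q is an
   R-ring via nu : R -> Q: it respects and reflects req, is onto, is a ring
   homomorphism, and g(r + I_S) = nu r. *)
Definition uloc_R_iso (R Q : pzRingType) (S : R -> Prop)
  (nu : R -> Q) (g : rterm S -> Q) : Prop :=
  [/\ forall t u, req t u <-> g t = g u,
      forall q, exists t, g t = q,
      g t0 = 0 /\ g t1 = 1,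
      forall t u, [/\ g (tAdd t u) = g t + g u, g (tOpp t) = - g t
                     & g (tMul t u) = g t * g u]
    & forall r, g (tC r) = nu r].

(* Main.v *)
Require Import Defs.
From HB Require Import structures.
From mathcomp Require Import all_boot all_order all_algebra.
From Stdlib Require Import Setoid Morphisms ClassicalEpsilon.
Set Implicit Arguments. Unset Strict Implicit.
Import GRing.Theory.
Local Open Scope ring_scope.


Add Parametric Relation (R : pzRingType) (S : R -> Prop) : (rterm S) (@req R S)
  reflexivity proved by (@req_refl R S)
  symmetry proved by (@req_sym R S)
  transitivity proved by (@req_trans R S) as req_rel.
Add Parametric Morphism (R : pzRingType) (S : R -> Prop) : (@tAdd R S)
  with signature (@req R S) ==> (@req R S) ==> (@req R S) as tAdd_mor.
Proof. by move=> *; apply: req_add. Qed.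
Add Parametric Morphism (R : pzRingType) (S : R -> Prop) : (@tMul R S)
  with signature (@req R S) ==> (@req R S) ==> (@req R S) as tMul_mor.
Proof. by move=> *; apply: req_mul. Qed.
Add Parametric Morphism (R : pzRingType) (S : R -> Prop) : (@tOpp R S)
  with signature (@req R S) ==> (@req R S) as tOpp_mor.
Proof. by move=> *; apply: req_opp. Qed.

Lemma req_addr0 (R : pzRingType) (S : R -> Prop) (t : rterm S) : req (tAdd t t0) t.
Proof. setoid_rewrite req_addC. apply: req_add0. Qed.

Lemma req_mul0r (R : pzRingType) (S : R -> Prop) (t : rterm S) : req (tMul t0 t) t0.
Proof.
set x := tMul t0 t.
have xx : req (tAdd x x) x.
  rewrite /x. setoid_rewrite <- req_mulDl. setoid_rewrite req_add0. reflexivity.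
transitivity (tAdd (tOpp x) (tAdd x x)).
  setoid_rewrite req_addA. setoid_rewrite req_addN. symmetry. apply: req_add0.
setoid_rewrite xx. apply: req_addN.
Qed.

Lemma req_mulr0 (R : pzRingType) (S : R -> Prop) (t : rterm S) : req (tMul t t0) t0.
Proof.
set x := tMul t t0.
have xx : req (tAdd x x) x.
  rewrite /x. setoid_rewrite <- req_mulDr. setoid_rewrite req_add0. reflexivity.
transitivity (tAdd (tOpp x) (tAdd x x)).
  setoid_rewrite req_addA. setoid_rewrite req_addN. symmetry. apply: req_add0.
setoid_rewrite xx. apply: req_addN.
Qed.

Lemma req_opp0 (R : pzRingType) (S : R -> Prop) : req (tOpp t0 : rterm S) t0.
Proof.
transitivity (tAdd (tOpp (t0 : rterm S)) t0). symmetry. apply: req_addr0.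
apply: req_addN.
Qed.

Lemma req_sub0 (R : pzRingType) (S : R -> Prop) (t u : rterm S) :
  req (tAdd t (tOpp u)) t0 -> req t u.
Proof.
move=> E.
transitivity (tAdd t (tAdd (tOpp u) u)).
  setoid_rewrite req_addN. symmetry. apply: req_addr0.
setoid_rewrite req_addA. setoid_rewrite E. apply: req_add0.
Qed.

Lemma req_subself (R : pzRingType) (S : R -> Prop) (t : rterm S) :
  req (tAdd t (tOpp t)) t0.
Proof. setoid_rewrite req_addC. apply: req_addN. Qed.

Lemma req_cancel_l (R : pzRingType) (S : R -> Prop) (s : R) (Hs : S s) (t : rterm S) :
  req (tMul (tC s) t) t0 -> req t t0.
Proof.
move=> E.
transitivity (tMul (tMul (tX (exist S s Hs)) (tC s)) t).
  have xs := req_xs (exist S s Hs); simpl in xs.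
  setoid_rewrite xs. symmetry. apply: req_mul1l.
setoid_rewrite <- req_mulA. setoid_rewrite E. apply: req_mulr0.
Qed.

Lemma req_cancel_r (R : pzRingType) (S : R -> Prop) (s : R) (Hs : S s) (t : rterm S) :
  req (tMul t (tC s)) t0 -> req t t0.
Proof.
move=> E.
transitivity (tMul t (tMul (tC s) (tX (exist S s Hs)))).
  have sx := req_sx (exist S s Hs); simpl in sx.
  setoid_rewrite sx. symmetry. apply: req_mul1r.
setoid_rewrite req_mulA. setoid_rewrite E. apply: req_mul0r.
Qed.

Lemma ass_ideal (R : pzRingType) (S : R -> Prop) : ideal_of (ass S).
Proof.
rewrite /ass; split.
- exact: req_C0.
- move=> x y Ex Ey.
  setoid_rewrite req_CD. setoid_rewrite req_CN. setoid_rewrite Ex. setoid_rewrite Ey.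
  setoid_rewrite req_opp0. apply: req_add0.
- move=> r x Ex; split.
  + setoid_rewrite req_CM. setoid_rewrite Ex. apply: req_mulr0.
  + setoid_rewrite req_CM. setoid_rewrite Ex. apply: req_mul0r.
Qed.

Lemma ass_mulS (R : pzRingType) (S : R -> Prop) s r : S s -> ass S (s * r) -> ass S r.
Proof.
rewrite /ass => Hs E. apply: (req_cancel_l Hs). setoid_rewrite <- req_CM. exact: E.
Qed.

Lemma ass_mulSr (R : pzRingType) (S : R -> Prop) s r : S s -> ass S (r * s) -> ass S r.
Proof.
rewrite /ass => Hs E. apply: (req_cancel_r Hs). setoid_rewrite <- req_CM. exact: E.
Qed.

Lemma ass_notS (R : pzRingType) (S : R -> Prop) s : uloc_nonzero S -> S s -> ~ ass S s.
Proof.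
rewrite /ass => NZ Hs E; apply: NZ.
transitivity (tMul (tX (exist S s Hs)) (tC s)). symmetry. exact: (req_xs (exist S s Hs)).
setoid_rewrite E. apply: req_mulr0.
Qed.

Lemma ass_eq (R : pzRingType) (S : R -> Prop) (x y : R) :
  req (tC x : rterm S) (tC y) -> ass S (x - y).
Proof.
rewrite /ass => E. setoid_rewrite req_CD. setoid_rewrite req_CN. setoid_rewrite E.
apply: req_subself.
Qed.

Lemma ore_l (R : pzRingType) (S : R -> Prop) : left_localizable S ->
  forall r s, S s -> exists s' r', S s' /\ ass S (s' * r - r' * s).
Proof.
move=> [_ _ Loc] r s Hs.
have [[s' Hs'] [r' E]] := Loc (tMul (tC r) (tX (exist S s Hs))).
exists s', r'; split => //; apply: ass_eq.
apply: (req_trans (req_CM S s' r)). apply: req_sym; apply: (req_trans (req_CM S r' s)); apply: req_sym.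
transitivity (tMul (tC s') (tMul (tMul (tC r) (tX (exist S s Hs))) (tC s))).
  have xs := req_xs (exist S s Hs); simpl in xs.
  setoid_rewrite <- req_mulA. setoid_rewrite xs. setoid_rewrite req_mul1r. reflexivity.
setoid_rewrite E.
have sx := req_sx (exist S s' Hs'); simpl in sx.
setoid_rewrite req_mulA. setoid_rewrite req_mulA. setoid_rewrite sx.
setoid_rewrite req_mul1l. reflexivity.
Qed.

Lemma ore_r (R : pzRingType) (S : R -> Prop) : right_localizable S ->
  forall r s, S s -> exists s' r', S s' /\ ass S (r * s' - s * r').
Proof.
move=> [_ _ Loc] r s Hs.
have [[s' Hs'] [r' E]] := Loc (tMul (tX (exist S s Hs)) (tC r)).
exists s', r'; split => //; apply: ass_eq.
apply: (req_trans (req_CM S r s')). apply: req_sym; apply: (req_trans (req_CM S s r')); apply: req_sym.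
transitivity (tMul (tMul (tC s) (tMul (tX (exist S s Hs)) (tC r))) (tC s')).
  have sx := req_sx (exist S s Hs); simpl in sx.
  setoid_rewrite req_mulA. setoid_rewrite sx. setoid_rewrite req_mul1l. reflexivity.
setoid_rewrite E.
have xs := req_xs (exist S s' Hs'); simpl in xs.
setoid_rewrite <- req_mulA. setoid_rewrite <- req_mulA. setoid_rewrite xs.
setoid_rewrite req_mul1r. reflexivity.
Qed.

Fixpoint ev (R P : pzRingType) (S : R -> Prop) (g : R -> P) (iv : R -> P)
  (t : rterm S) : P :=
  match t with
  | tC r => g r
  | tX s => iv (sval s)
  | t0 => 0
  | t1 => 1
  | tAdd t u => ev g iv t + ev g iv u
  | tOpp t => - ev g iv t
  | tMul t u => ev g iv t * ev g iv u
  end.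

Lemma ev_sound (R P : pzRingType) (S : R -> Prop) (g : {rmorphism R -> P}) (iv : R -> P) :
  (forall s, S s -> is_inverse (iv s) (g s)) ->
  forall t u : rterm S, req t u -> ev g iv t = ev g iv u.
Proof.
move=> Hiv t u E; induction E; simpl; try congruence.
- by rewrite addrA.
- by rewrite addrC.
- by rewrite add0r.
- by rewrite addNr.
- by rewrite mulrA.
- by rewrite mul1r.
- by rewrite mulr1.
- by rewrite mulrDl.
- by rewrite mulrDr.
- by rewrite rmorph0.
- by rewrite rmorph1.
- by rewrite rmorphD.
- by rewrite rmorphN.
- by rewrite rmorphM.
- by case: s => s Hs /=; case: (Hiv s Hs).
- by case: s => s Hs /=; case: (Hiv s Hs).
Qed.


Definition mkfun (A B : pzRingType) (f : A -> B)
  (H1 : GRing.nmod_morphism f) (H2 : GRing.monoid_morphism f) : A -> B := f.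
HB.instance Definition _ (A B : pzRingType) (f : A -> B) H1 H2 :=
  GRing.isNmodMorphism.Build A B (@mkfun A B f H1 H2) H1.
HB.instance Definition _ (A B : pzRingType) (f : A -> B) H1 H2 :=
  GRing.isMonoidMorphism.Build A B (@mkfun A B f H1 H2) H2.

Lemma mk_rmorph (A B : pzRingType) (f : A -> B) :
  GRing.nmod_morphism f -> GRing.monoid_morphism f ->
  exists g : {rmorphism A -> B}, forall x, g x = f x.
Proof. move=> H1 H2. by exists (@mkfun A B f H1 H2 : {rmorphism A -> B}). Qed.

Definition inv_of (P : pzRingType) (x : P) : P :=
  epsilon (inhabits 0) (fun v => is_inverse v x).
Lemma inv_ofP (P : pzRingType) (x : P) : (exists v, is_inverse v x) -> is_inverse (inv_of x) x.
Proof. move=> [v Hv]. rewrite /inv_of. apply: (epsilon_spec (inhabits 0) (fun v => is_inverse v x)). by exists v. Qed.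

Lemma inv_uniq (P : pzRingType) (x u v : P) : is_inverse u x -> is_inverse v x -> u = v.
Proof. move=> [H1 H2] [H3 H4]. by rewrite -(mulr1 u) -H4 mulrA H1 mul1r. Qed.

Lemma inv_mul (P : pzRingType) (W x y v : P) : W * (x * y) = 1 -> y * v = 1 -> W * x = v.
Proof. move=> H1 H2. by rewrite -(mulr1 (W * x)) -H2 mulrA -(mulrA W) H1 mul1r. Qed.

Lemma inv_prod (P : pzRingType) (x y u v : P) :
  is_inverse u x -> is_inverse v y -> is_inverse (v * u) (x * y).
Proof.
move=> [H1 H2] [H3 H4]; split.
- by rewrite mulrA -(mulrA v) H1 mulr1 H3.
- by rewrite mulrA -(mulrA x) H4 mulr1 H2.
Qed.

Lemma inv1 (P : pzRingType) : is_inverse (1 : P) 1.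
Proof. by split; rewrite mulr1. Qed.

Lemma mulfrac (X : pzRingType) (xc xa1 xd xt2 xt1 W v2 v1 : X) :
  xc * xa1 = xd * xt2 -> xt2 * v2 = 1 -> W * (xc * xt1) = 1 -> xt1 * v1 = 1 ->
  W * xd = v1 * xa1 * v2.
Proof.
move=> E H2 HW H1.
rewrite -(mulr1 (W * xd)) -H2 mulrA -(mulrA W) -E (mulrA W) (inv_mul HW H1). by [].
Qed.

Lemma induced (R B C : pzRingType) (p : {rmorphism R -> B}) (g : {rmorphism R -> C}) :
  surj p -> (forall r, p r = 0 -> g r = 0) ->
  exists h : {rmorphism B -> C}, forall r, h (p r) = g r.
Proof.
move=> ps pk.
pose pre y := epsilon (inhabits 0) (fun x => p x = y).
have preP y : p (pre y) = y by rewrite /pre; apply: (epsilon_spec (inhabits 0) (fun x => p x = y)); apply: ps.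
pose f y := g (pre y).
have fP r : f (p r) = g r.
  apply/eqP; rewrite -subr_eq0 -rmorphB; apply/eqP; apply: pk.
  by rewrite rmorphB preP subrr.
have [h Hh] : exists h : {rmorphism B -> C}, forall x, h x = f x.
  apply: mk_rmorph; split.
  - by rewrite -(rmorph0 p) fP rmorph0.
  - move=> x y. by rewrite -(preP x) -(preP y) -rmorphD !fP rmorphD.
  - by rewrite -(rmorph1 p) fP rmorph1.
  - move=> x y. by rewrite -(preP x) -(preP y) -rmorphM !fP rmorphM.
by exists h => r; rewrite Hh fP.
Qed.

Lemma UP (A Q P : pzRingType) (T : A -> Prop) (sg : {rmorphism A -> Q})
  (h : {rmorphism A -> P}) :
  left_ore T -> left_fractions T sg -> (forall t, T t -> exists v, is_inverse v (h t)) ->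
  exists phi : {rmorphism Q -> P}, forall t a u v, T t ->
    is_inverse u (sg t) -> is_inverse v (h t) -> phi (u * sg a) = v * h a.
Proof.
move=> [[TM T1 _] Ore] [LF1 LF2 LF3] Hh.
have K : forall t a u v t' a' u' v', T t -> T t' ->
    is_inverse u (sg t) -> is_inverse v (h t) ->
    is_inverse u' (sg t') -> is_inverse v' (h t') ->
    u * sg a = u' * sg a' -> v * h a = v' * h a'.
  move=> t a u v t' a' u' v' Tt Tt' [u1 u2] [v1 v2] [u1' u2'] [v1' v2'] E.
  have [c [d [Tc Ecd]]] := Ore t t' Tt'.
  have Tw : T (c * t) by apply: TM.
  have [W [W1 W2]] := Hh _ Tw.
  have Es : sg (c * a) = sg (d * a').
    have L : sg c * sg a = sg (c * t) * (u * sg a).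
      by rewrite rmorphM -mulrA (mulrA (sg t)) u2 mul1r.
    have L' : sg d * sg a' = sg (d * t') * (u' * sg a').
      by rewrite rmorphM -mulrA (mulrA (sg t')) u2' mul1r.
    by rewrite !rmorphM L L' E Ecd.
  have Eh : h (c * a) = h (d * a').
    have : sg (c * a - d * a') = 0 by rewrite rmorphB Es subrr.
    move/(LF3 _) => [e [Te Ee]].
    have [ve [ve1 ve2]] := Hh _ Te.
    apply/eqP; rewrite -subr_eq0 -rmorphB; apply/eqP.
    by rewrite -(mul1r (h _)) -ve1 -mulrA -rmorphM Ee rmorph0 mulr0.
  have Wc : W * h c = v by apply: (inv_mul (y := h t)) => //; rewrite -rmorphM.
  have Wd : W * h d = v'.
    by apply: (inv_mul (y := h t')) => //; rewrite -rmorphM -Ecd.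
  by rewrite -Wc -Wd -!mulrA -!rmorphM Eh.
pose rep q := epsilon (inhabits (0, 0, 0))
  (fun x : A * A * Q => [/\ T x.1.1, is_inverse x.2 (sg x.1.1) & q = x.2 * sg x.1.2]).
have repP q : [/\ T (rep q).1.1, is_inverse (rep q).2 (sg (rep q).1.1) & q = (rep q).2 * sg (rep q).1.2].
  rewrite /rep; apply: (epsilon_spec (inhabits (0, 0, 0))
    (fun x : A * A * Q => [/\ T x.1.1, is_inverse x.2 (sg x.1.1) & q = x.2 * sg x.1.2])).
  have [t [a [u [Tt Hu Eq]]]] := LF2 q. by exists (t, a, u).
pose f q := inv_of (h (rep q).1.1) * h (rep q).1.2.
have fP : forall t a u v, T t -> is_inverse u (sg t) -> is_inverse v (h t) ->
    f (u * sg a) = v * h a.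
  move=> t a u v Tt Hu Hv.
  have [T0 H0 E0] := repP (u * sg a).
  apply: (K _ _ _ _ _ _ _ _ T0 Tt H0 (inv_ofP (Hh _ T0)) Hu Hv).
  by rewrite -E0.
have Rep : forall q, exists t a u v, [/\ T t, is_inverse u (sg t), is_inverse v (h t) & q = u * sg a].
  move=> q; have [t [a [u [Tt Hu Eq]]]] := LF2 q.
  have [v Hv] := Hh _ Tt. by exists t, a, u, v.
have one_inv := @inv1 Q.
have f_sg : forall a, f (sg a) = h a.
  move=> a. rewrite -(mul1r (sg a)) (fP 1 a 1 1) ?mul1r //; by rewrite rmorph1; apply: inv1.
have [phi Hphi] : exists phi : {rmorphism Q -> P}, forall x, phi x = f x.
  apply: mk_rmorph; split.
  - by rewrite -(rmorph0 sg) f_sg rmorph0.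
  - move=> q1 q2.
    have [t1 [a1 [u1 [v1 [Tt1 Hu1 Hv1 ->]]]]] := Rep q1.
    have [t2 [a2 [u2 [v2 [Tt2 Hu2 Hv2 ->]]]]] := Rep q2.
    have [c [d [Tc Ecd]]] := Ore t1 t2 Tt2.
    have Tw : T (c * t1) by apply: TM.
    have [U HU] := LF1 _ Tw.
    have [W HW] := Hh _ Tw.
    have Uc : U * sg c = u1 by apply: (inv_mul (y := sg t1)); [rewrite -rmorphM; case: HU | case: Hu1].
    have Ud : U * sg d = u2 by apply: (inv_mul (y := sg t2)); [rewrite -rmorphM -Ecd; case: HU | case: Hu2].
    have Wc : W * h c = v1 by apply: (inv_mul (y := h t1)); [rewrite -rmorphM; case: HW | case: Hv1].
    have Wd : W * h d = v2 by apply: (inv_mul (y := h t2)); [rewrite -rmorphM -Ecd; case: HW | case: Hv2].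
    have -> : u1 * sg a1 + u2 * sg a2 = U * sg (c * a1 + d * a2).
      by rewrite rmorphD !rmorphM mulrDr !mulrA Uc Ud.
    rewrite (fP _ _ _ _ Tw HU HW) (fP _ _ _ _ Tt1 Hu1 Hv1) (fP _ _ _ _ Tt2 Hu2 Hv2).
    by rewrite rmorphD !rmorphM mulrDr !mulrA Wc Wd.
  - by rewrite -(rmorph1 sg) f_sg rmorph1.
  - move=> q1 q2.
    have [t1 [a1 [u1 [v1 [Tt1 Hu1 Hv1 ->]]]]] := Rep q1.
    have [t2 [a2 [u2 [v2 [Tt2 Hu2 Hv2 ->]]]]] := Rep q2.
    have [c [d [Tc Ecd]]] := Ore a1 t2 Tt2.
    have Tw : T (c * t1) by apply: TM.
    have [U HU] := LF1 _ Tw.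
    have [W HW] := Hh _ Tw.
    have Ud : U * sg d = u1 * sg a1 * u2.
      apply: (mulfrac (xc := sg c) (xt2 := sg t2) (xt1 := sg t1)).
      - by rewrite -!rmorphM Ecd.
      - by case: Hu2.
      - by rewrite -rmorphM; case: HU.
      - by case: Hu1.
    have Wd : W * h d = v1 * h a1 * v2.
      apply: (mulfrac (xc := h c) (xt2 := h t2) (xt1 := h t1)).
      - by rewrite -!rmorphM Ecd.
      - by case: Hv2.
      - by rewrite -rmorphM; case: HW.
      - by case: Hv1.
    have -> : u1 * sg a1 * (u2 * sg a2) = U * sg (d * a2).
      by rewrite rmorphM [RHS]mulrA Ud !mulrA.
    rewrite (fP _ _ _ _ Tw HU HW) (fP _ _ _ _ Tt1 Hu1 Hv1) (fP _ _ _ _ Tt2 Hu2 Hv2).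
    by rewrite rmorphM mulrA Wd !mulrA.
exists phi => t a u v Tt Hu Hv. by rewrite Hphi (fP t a u v Tt Hu Hv).
Qed.


Record OreHyp (A : pzRingType) (T : A -> Prop) : Prop := {
  oT1 : T 1;
  oTM : forall x y, T x -> T y -> T (x * y);
  oOre : forall r s, T s -> exists s' r', T s' /\ s' * r = r' * s;
  oL : forall s, T s -> GRing.lreg s;
  oR : forall s, T s -> GRing.rreg s }.

Notation mgood T m := (T (m : _ * _).1) (only parsing).
Definition meqv (A : pzRingType) (m n : A * A) :=
  forall c d, c * m.1 = d * n.1 -> c * m.2 = d * n.2.
Definition oref (A : pzRingType) (T : A -> Prop) (r s : A) : A * A :=
  epsilon (inhabits (1, 0)) (fun p => T p.1 /\ p.1 * r = p.2 * s).
Lemma oref_spec (A : pzRingType) (T : A -> Prop) (H : OreHyp T) r s :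
  T s -> T (oref T r s).1 /\ (oref T r s).1 * r = (oref T r s).2 * s.
Proof.
move=> Ts; rewrite /oref; apply: (epsilon_spec (inhabits (1,0)) (fun p => T p.1 /\ p.1 * r = p.2 * s)).
have [s' [r' [Ts' E]]] := oOre H r Ts. by exists (s', r').
Qed.

Definition madd (A : pzRingType) (T : A -> Prop) (m n : A * A) : A * A :=
  let p := oref T m.1 n.1 in (p.1 * m.1, p.1 * m.2 + p.2 * n.2).
Definition mopp (A : pzRingType) (m : A * A) : A * A := (m.1, - m.2).
Definition mzero (A : pzRingType) : A * A := (1, 0).
Definition mlmul (A : pzRingType) (T : A -> Prop) (r : A) (m : A * A) : A * A :=
  let p := oref T r m.1 in (p.1, p.2 * m.2).
Definition minv (A : pzRingType) (s : A) (m : A * A) : A * A := (m.1 * s, m.2).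

Lemma meqv_refl (A : pzRingType) (T : A -> Prop) (H : OreHyp T) m :
  mgood T m -> meqv m m.
Proof. by move=> g c d /(oR H g) ->. Qed.

Lemma meqv_sym (A : pzRingType) (m n : A * A) : meqv m n -> meqv n m.
Proof. by move=> E c d e; symmetry; apply: E. Qed.

Lemma meqv_trans (A : pzRingType) (T : A -> Prop) (H : OreHyp T) m n k :
  mgood T n -> meqv m n -> meqv n k -> meqv m k.
Proof.
move=> gn E1 E2 c d e.
have [g [h [Tg E]]] := oOre H (c * m.1) gn.
have E3 : (g * c) * m.1 = h * n.1 by rewrite -mulrA.
have E4 : h * n.1 = (g * d) * k.1 by rewrite -E e mulrA.
apply: (oL H Tg). by rewrite !mulrA (E1 _ _ E3) (E2 _ _ E4).
Qed.

Lemma meqv_at (A : pzRingType) (T : A -> Prop) (H : OreHyp T) m n w c d :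
  mgood T m -> mgood T n -> T w -> c * m.1 = w -> d * n.1 = w ->
  c * m.2 = d * n.2 -> meqv m n.
Proof.
move=> gm gn Tw e1 e2 e3 e f ef.
have [g [h [Tg E]]] := oOre H (e * m.1) Tw.
have Ge : g * e = h * c.
  apply: (oR H gm). by rewrite -mulrA E -e1 mulrA.
have Gf : g * f = h * d.
  apply: (oR H gn). by rewrite -mulrA -ef E -e2 mulrA.
apply: (oL H Tg). by rewrite !mulrA Ge Gf -!mulrA e3.
Qed.

Lemma meqv_scale (A : pzRingType) (T : A -> Prop) (H : OreHyp T) m c :
  mgood T m -> T (c * m.1) -> meqv m (c * m.1, c * m.2).
Proof.
move=> gm Tc; apply: (meqv_at H (w := c * m.1) (c := c) (d := 1)) => //=; by rewrite mul1r.
Qed.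

Lemma mgood_add (A : pzRingType) (T : A -> Prop) (H : OreHyp T) m n :
  mgood T m -> mgood T n -> mgood T (madd T m n).
Proof.
move=> gm gn; rewrite /madd /=.
have [T1 _] := oref_spec H m.1 gn. exact (oTM H T1 gm).
Qed.
Lemma mgood_opp (A : pzRingType) (T : A -> Prop) m : mgood T m -> mgood T (mopp m).
Proof. by []. Qed.
Lemma mgood_zero (A : pzRingType) (T : A -> Prop) (H : OreHyp T) : mgood T (@mzero A).
Proof. exact: oT1 H. Qed.
Lemma mgood_lmul (A : pzRingType) (T : A -> Prop) (H : OreHyp T) r m :
  mgood T m -> mgood T (mlmul T r m).
Proof. by move=> gm; have [T1 _] := oref_spec H r gm. Qed.
Lemma mgood_inv (A : pzRingType) (T : A -> Prop) (H : OreHyp T) s m :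
  T s -> mgood T m -> mgood T (minv s m).
Proof. by move=> Ts gm; exact (oTM H gm Ts). Qed.

Lemma madd_spec (A : pzRingType) (T : A -> Prop) (H : OreHyp T) m n w c d :
  mgood T m -> mgood T n -> T w -> c * m.1 = w -> d * n.1 = w ->
  meqv (madd T m n) (w, c * m.2 + d * n.2).
Proof.
move=> gm gn Tw e1 e2.
have [Tp Ep] := oref_spec H m.1 gn.
set p := oref T m.1 n.1 in Tp Ep *.
have [e [f [Te E]]] := oOre H (p.1 * m.1) Tw.
have Tep : T (e * (p.1 * m.1)) by exact (oTM H Te (oTM H Tp gm)).
apply: (meqv_at H (w := e * (p.1 * m.1)) (c := e) (d := f)) => //.
- exact: mgood_add.
have G1 : e * p.1 = f * c by apply: (oR H gm); rewrite -mulrA E -e1 mulrA.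
have G2 : e * p.2 = f * d by apply: (oR H gn); rewrite -mulrA -Ep E -e2 mulrA.
by rewrite /= !mulrDr !mulrA G1 G2.
Qed.

Lemma mlmul_spec (A : pzRingType) (T : A -> Prop) (H : OreHyp T) r m s' r' :
  mgood T m -> T s' -> s' * r = r' * m.1 -> meqv (mlmul T r m) (s', r' * m.2).
Proof.
move=> gm Ts' E0.
have [Tp Ep] := oref_spec H r gm.
set p := oref T r m.1 in Tp Ep *.
have [e [f [Te E]]] := oOre H p.1 Ts'.
apply: (meqv_at H (w := e * p.1) (c := e) (d := f)) => //.
- exact (oTM H Te Tp).
have G : e * p.2 = f * r' by apply: (oR H gm); rewrite -mulrA -Ep mulrA E -mulrA E0 mulrA.
by rewrite /= !mulrA G.
Qed.

Lemma meqv_common (A : pzRingType) (T : A -> Prop) (H : OreHyp T) m n :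
  mgood T m -> mgood T n -> meqv m n ->
  exists c d, [/\ T (c * m.1), c * m.1 = d * n.1 & c * m.2 = d * n.2].
Proof.
move=> gm gn E.
have [c [d [Tc E1]]] := oOre H m.1 gn.
exists c, d; split; [exact (oTM H Tc gm )| exact: E1 | exact: E E1].
Qed.

Lemma resp_of_scale (A : pzRingType) (T : A -> Prop) (H : OreHyp T) (F : A * A -> A * A) :
  (forall m, mgood T m -> mgood T (F m)) ->
  (forall m c, mgood T m -> T (c * m.1) -> meqv (F m) (F (c * m.1, c * m.2))) ->
  forall m n, mgood T m -> mgood T n -> meqv m n -> meqv (F m) (F n).
Proof.
move=> gF sF m n gm gn E.
have [c [d [Tc E1 E2]]] := meqv_common H gm gn E.
have Td : T (d * n.1) by rewrite -E1.
apply: (meqv_trans H (n := F (c * m.1, c * m.2))); first exact: gF.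
  exact: sF.
rewrite E1 E2. apply: meqv_sym. exact: sF.
Qed.

Lemma madd_resp1 (A : pzRingType) (T : A -> Prop) (H : OreHyp T) m m' n :
  mgood T m -> mgood T m' -> mgood T n -> meqv m m' -> meqv (madd T m n) (madd T m' n).
Proof.
move=> gm gm' gn; move: m m' gm gm'.
apply: (resp_of_scale H (F := fun m => madd T m n)).
  by move=> m gm; apply: mgood_add.
move=> m c gm Tc.
have [Tp Ep] := oref_spec H (c * m.1) gn.
set p := oref T (c * m.1) n.1 in Tp Ep *.
apply: (meqv_trans H (n := (p.1 * (c * m.1), (p.1 * c) * m.2 + p.2 * n.2))).
- exact (oTM H Tp Tc).
- apply: (madd_spec H (c := p.1 * c) (d := p.2)) => //.
  + exact (oTM H Tp Tc).
  + by rewrite mulrA.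
- rewrite /madd /= -/p -mulrA. apply: (meqv_refl H); exact (oTM H Tp Tc).
Qed.

Lemma madd_comm (A : pzRingType) (T : A -> Prop) (H : OreHyp T) m n :
  mgood T m -> mgood T n -> meqv (madd T m n) (madd T n m).
Proof.
move=> gm gn.
have [Tp Ep] := oref_spec H m.1 gn.
have Tw : T ((oref T m.1 n.1).1 * m.1) by exact (oTM H Tp gm).
apply: meqv_sym.
apply: (meqv_trans H (n := ((oref T m.1 n.1).1 * m.1,
          (oref T m.1 n.1).2 * n.2 + (oref T m.1 n.1).1 * m.2))) => //.
  by apply: (madd_spec H) => //; rewrite Ep.
rewrite /madd /= addrC. by apply: (meqv_refl H).
Qed.

Lemma madd_resp (A : pzRingType) (T : A -> Prop) (H : OreHyp T) m m' n n' :
  mgood T m -> mgood T m' -> mgood T n -> mgood T n' -> meqv m m' -> meqv n n' ->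
  meqv (madd T m n) (madd T m' n').
Proof.
move=> gm gm' gn gn' E1 E2.
apply: (meqv_trans H (n := madd T m' n)); first exact: mgood_add.
  exact: madd_resp1.
apply: (meqv_trans H (n := madd T n m')); first exact: mgood_add.
  exact: madd_comm.
apply: (meqv_trans H (n := madd T n' m')); first exact: mgood_add.
  exact: madd_resp1.
exact: madd_comm.
Qed.

Lemma common3 (A : pzRingType) (T : A -> Prop) (H : OreHyp T) x y z :
  T x -> T y -> T z ->
  exists c d e, [/\ T (c * x), d * y = c * x & e * z = c * x].
Proof.
move=> Tx Ty Tz.
have [c0 [d0 [Tc0 E0]]] := oOre H x Ty.
have Tw0 : T (c0 * x) by exact (oTM H Tc0 Tx).
have [c1 [e [Tc1 E1]]] := oOre H (c0 * x) Tz.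
exists (c1 * c0), (c1 * d0), e; split.
- rewrite -mulrA; exact (oTM H Tc1 Tw0).
- by rewrite -!mulrA E0.
- by rewrite -mulrA E1.
Qed.

Lemma madd_assoc (A : pzRingType) (T : A -> Prop) (H : OreHyp T) m n k :
  mgood T m -> mgood T n -> mgood T k ->
  meqv (madd T (madd T m n) k) (madd T m (madd T n k)).
Proof.
move=> gm gn gk.
have [c [d [e [Tw E1 E2]]]] := common3 H gm gn gk.
move: Tw E1 E2; set w := c * m.1 => Tw E1 E2.
have E0 : c * m.1 = w by [].
have gmn : mgood T (madd T m n) by exact: mgood_add.
have gnk : mgood T (madd T n k) by exact: mgood_add.
have g1 : mgood T (w, c * m.2 + d * n.2) by [].
have g2 : mgood T (w, d * n.2 + e * k.2) by [].
have S1 : meqv (madd T m n) (w, c * m.2 + d * n.2) by exact: (madd_spec H).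
have S2 : meqv (madd T n k) (w, d * n.2 + e * k.2) by exact: (madd_spec H).
have S3 : meqv (madd T (w, c * m.2 + d * n.2) k) (w, 1 * (c * m.2 + d * n.2) + e * k.2).
  apply: (madd_spec H) => //. by rewrite mul1r.
have S4 : meqv (madd T m (w, d * n.2 + e * k.2)) (w, c * m.2 + 1 * (d * n.2 + e * k.2)).
  apply: (madd_spec H) => //. by rewrite mul1r.
have R1 : meqv (madd T (madd T m n) k) (madd T (w, c * m.2 + d * n.2) k).
  apply: (madd_resp H) => //. by apply: (meqv_refl H).
have R2 : meqv (madd T m (madd T n k)) (madd T m (w, d * n.2 + e * k.2)).
  apply: (madd_resp H) => //. by apply: (meqv_refl H).
apply: (meqv_trans H _ R1); first exact: mgood_add.
apply: (meqv_trans H _ S3) => //.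
apply: meqv_sym.
apply: (meqv_trans H _ R2); first exact: mgood_add.
apply: (meqv_trans H _ S4) => //.
rewrite !mul1r addrA. by apply: (meqv_refl H).
Qed.

Lemma madd0 (A : pzRingType) (T : A -> Prop) (H : OreHyp T) m :
  mgood T m -> meqv (madd T (@mzero A) m) m.
Proof.
move=> gm.
apply: (meqv_trans H (n := (m.1, m.1 * 0 + 1 * m.2))) => //.
  apply: (madd_spec H (c := m.1) (d := 1)) => //=; rewrite ?mulr1 ?mul1r //. exact: (oT1 H).
rewrite mulr0 add0r mul1r; case: m gm => ? ? ?. by apply: (meqv_refl H).
Qed.

Lemma maddN (A : pzRingType) (T : A -> Prop) (H : OreHyp T) m :
  mgood T m -> meqv (madd T (mopp m) m) (@mzero A).
Proof.
move=> gm.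
apply: (meqv_trans H (n := (m.1, 1 * (- m.2) + 1 * m.2))) => //.
  apply: (madd_spec H) => //; by rewrite ?mulr1 ?mul1r.
apply: (meqv_at H (w := m.1) (c := 1) (d := m.1)) => //=.
- exact: (oT1 H).
- by rewrite mul1r.
- by rewrite mulr1.
- by rewrite !mul1r addNr mulr0.
Qed.

Lemma mopp_resp (A : pzRingType) (T : A -> Prop) (H : OreHyp T) m n :
  mgood T m -> mgood T n -> meqv m n -> meqv (mopp m) (mopp n).
Proof.
move=> gm gn E c d e. by rewrite /= !mulrN (E c d e).
Qed.

Lemma mopp_add (A : pzRingType) (T : A -> Prop) (H : OreHyp T) m n :
  mgood T m -> mgood T n -> meqv (mopp (madd T m n)) (madd T (mopp m) (mopp n)).
Proof.
move=> gm gn; rewrite /mopp /madd /= opprD !mulrN. apply: (meqv_refl H).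
exact (oTM H (proj1 (oref_spec H m.1 gn)) gm).
Qed.

Lemma mlmul_resp (A : pzRingType) (T : A -> Prop) (H : OreHyp T) r m n :
  mgood T m -> mgood T n -> meqv m n -> meqv (mlmul T r m) (mlmul T r n).
Proof.
move: m n; apply: (resp_of_scale H (F := mlmul T r)).
  by move=> m gm; apply: mgood_lmul.
move=> m c gm Tc.
have [Tq Eq] := oref_spec H r Tc.
rewrite /mlmul /=.
set q := oref T r (c * m.1) in Tq Eq *.
apply: (meqv_trans H (n := (q.1, (q.2 * c) * m.2))) => //.
  apply: (mlmul_spec H) => //. by rewrite Eq mulrA.
rewrite -mulrA. by apply: (meqv_refl H).
Qed.

Lemma mlmul_add (A : pzRingType) (T : A -> Prop) (H : OreHyp T) r m n :
  mgood T m -> mgood T n ->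
  meqv (mlmul T r (madd T m n)) (madd T (mlmul T r m) (mlmul T r n)).
Proof.
move=> gm gn.
have [Tp Ep] := oref_spec H m.1 gn.
have gw : T ((oref T m.1 n.1).1 * m.1) by exact (oTM H Tp gm).
rewrite {1}/madd /=.
set p := oref T m.1 n.1 in Tp Ep gw *.
have [Tq Eq] := oref_spec H r gw.
rewrite {1}/mlmul /=.
set q := oref T r (p.1 * m.1) in Tq Eq *.
have S1 : meqv (mlmul T r m) (q.1, (q.2 * p.1) * m.2).
  apply: (mlmul_spec H) => //. by rewrite Eq mulrA.
have S2 : meqv (mlmul T r n) (q.1, (q.2 * p.2) * n.2).
  apply: (mlmul_spec H) => //. by rewrite Eq Ep mulrA.
have R : meqv (madd T (mlmul T r m) (mlmul T r n))
              (madd T (q.1, (q.2 * p.1) * m.2) (q.1, (q.2 * p.2) * n.2)).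
  apply: (madd_resp H) => //; exact: mgood_lmul.
apply: meqv_sym.
apply: (meqv_trans H _ R); first exact: mgood_add.
apply: (meqv_trans H (n := (q.1, 1 * ((q.2 * p.1) * m.2) + 1 * ((q.2 * p.2) * n.2)))) => //.
  apply: (madd_spec H) => //; by rewrite mul1r.
rewrite !mul1r mulrDr !mulrA. by apply: (meqv_refl H).
Qed.

Lemma mlmulD (A : pzRingType) (T : A -> Prop) (H : OreHyp T) a b m :
  mgood T m -> meqv (mlmul T (a + b) m) (madd T (mlmul T a m) (mlmul T b m)).
Proof.
move=> gm.
have [Tp Ep] := oref_spec H a gm.
have [Tq Eq] := oref_spec H b gm.
rewrite /madd /mlmul /=.
set p := oref T a m.1 in Tp Ep *.
set q := oref T b m.1 in Tq Eq *.
have [To Eo] := oref_spec H p.1 Tq.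
set o := oref T p.1 q.1 in To Eo *.
have Tw : T (o.1 * p.1) by exact (oTM H To Tp).
apply: (meqv_trans H (n := (o.1 * p.1, (o.1 * p.2 + o.2 * q.2) * m.2))) => //.
  apply: (mlmul_spec H) => //.
  by rewrite mulrDr {2}Eo -!mulrA Ep Eq !mulrA mulrDl.
rewrite mulrDl !mulrA. by apply: (meqv_refl H).
Qed.

Lemma mlmulM (A : pzRingType) (T : A -> Prop) (H : OreHyp T) a b m :
  mgood T m -> meqv (mlmul T (a * b) m) (mlmul T a (mlmul T b m)).
Proof.
move=> gm.
have [Tq Eq] := oref_spec H b gm.
rewrite {2 3}/mlmul /=.
set q := oref T b m.1 in Tq Eq *.
have [Tp Ep] := oref_spec H a Tq.
set p := oref T a q.1 in Tp Ep *.
apply: (meqv_trans H (n := (p.1, (p.2 * q.2) * m.2))) => //.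
  apply: (mlmul_spec H) => //. by rewrite mulrA Ep -mulrA Eq mulrA.
rewrite -mulrA. by apply: (meqv_refl H).
Qed.

Lemma mlmul1 (A : pzRingType) (T : A -> Prop) (H : OreHyp T) m :
  mgood T m -> meqv (mlmul T 1 m) m.
Proof.
move=> gm.
apply: (meqv_trans H (n := (m.1, 1 * m.2))) => //.
  apply: (mlmul_spec H) => //. by rewrite mulr1 mul1r.
rewrite mul1r; case: m gm => ? ? ?. by apply: (meqv_refl H).
Qed.

Lemma mlmul0 (A : pzRingType) (T : A -> Prop) (H : OreHyp T) m :
  mgood T m -> meqv (mlmul T 0 m) (@mzero A).
Proof.
move=> gm.
apply: (meqv_trans H (n := (1, 0 * m.2))) => //.
  exact: (oT1 H).
  apply: (mlmul_spec H) => //. exact: (oT1 H). by rewrite mulr0 mul0r.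
rewrite mul0r. apply: (meqv_refl H). exact: (oT1 H).
Qed.

Lemma mlmulN (A : pzRingType) (T : A -> Prop) (H : OreHyp T) a m :
  mgood T m -> meqv (mlmul T (- a) m) (mopp (mlmul T a m)).
Proof.
move=> gm.
have [Tp Ep] := oref_spec H a gm.
rewrite {2}/mlmul /mopp /=.
set p := oref T a m.1 in Tp Ep *.
apply: (meqv_trans H (n := (p.1, (- p.2) * m.2))) => //.
  apply: (mlmul_spec H) => //. by rewrite mulrN Ep mulNr.
rewrite mulNr. by apply: (meqv_refl H).
Qed.

Lemma minv_resp (A : pzRingType) (T : A -> Prop) (H : OreHyp T) s m n :
  T s -> mgood T m -> mgood T n -> meqv m n -> meqv (minv s m) (minv s n).
Proof.
move=> Ts; move: m n; apply: (resp_of_scale H (F := minv s)).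
  by move=> m gm; apply: mgood_inv.
move=> m c gm Tc. rewrite /minv /= -mulrA.
apply: (meqv_scale H); first exact (oTM H gm Ts).
rewrite /= mulrA; exact (oTM H Tc Ts).
Qed.

Lemma minv_add (A : pzRingType) (T : A -> Prop) (H : OreHyp T) s m n :
  T s -> mgood T m -> mgood T n ->
  meqv (minv s (madd T m n)) (madd T (minv s m) (minv s n)).
Proof.
move=> Ts gm gn.
have [Tp Ep] := oref_spec H m.1 gn.
rewrite {1}/madd /minv /=.
set p := oref T m.1 n.1 in Tp Ep *.
apply: meqv_sym; apply: (madd_spec H) => //=.
- exact (oTM H gm Ts).
- exact (oTM H gn Ts).
- exact (oTM H (oTM H Tp gm) Ts).
- by rewrite mulrA.
- by rewrite mulrA -Ep.
Qed.

Lemma mlmul_inv (A : pzRingType) (T : A -> Prop) (H : OreHyp T) s m :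
  T s -> mgood T m -> meqv (mlmul T s (minv s m)) m.
Proof.
move=> Ts gm.
apply: (meqv_trans H (n := (m.1, 1 * m.2))) => //.
  apply: (mlmul_spec H) => //. exact (oTM H gm Ts). by rewrite mul1r.
rewrite mul1r; case: m gm => ? ? ?. by apply: (meqv_refl H).
Qed.

Lemma minv_lmul (A : pzRingType) (T : A -> Prop) (H : OreHyp T) s m :
  T s -> mgood T m -> meqv (minv s (mlmul T s m)) m.
Proof.
move=> Ts gm.
have [Tp Ep] := oref_spec H s gm.
rewrite /minv /mlmul /=.
set p := oref T s m.1 in Tp Ep *.
rewrite Ep. apply: meqv_sym. apply: (meqv_scale H) => //.
rewrite -Ep. exact (oTM H Tp Ts).
Qed.

Fixpoint mint (R A : pzRingType) (S : R -> Prop) (T : A -> Prop) (pid : R -> A)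
  (t : rterm S) : A * A -> A * A :=
  match t with
  | tC r => mlmul T (pid r)
  | tX s => minv (pid (sval s))
  | t0 => fun _ => @mzero A
  | t1 => id
  | tAdd t u => fun m => madd T (mint T pid t m) (mint T pid u m)
  | tOpp t => fun m => mopp (mint T pid t m)
  | tMul t u => fun m => mint T pid t (mint T pid u m)
  end.

Definition MGood (A : pzRingType) (T : A -> Prop) (F : A * A -> A * A) :=
  [/\ forall m, mgood T m -> mgood T (F m),
      forall m n, mgood T m -> mgood T n -> meqv m n -> meqv (F m) (F n)
    & forall m n, mgood T m -> mgood T n -> meqv (F (madd T m n)) (madd T (F m) (F n))].

Lemma mint_good (R A : pzRingType) (S : R -> Prop) (T : A -> Prop) (H : OreHyp T)
  (pid : {rmorphism R -> A}) (HST : forall s, S s -> T (pid s)) (t : rterm S) :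
  MGood T (mint T pid t).
Proof.
elim: t => [r | [s Ss] | | | t [g1 r1 a1] u [g2 r2 a2] | t [g1 r1 a1] | t [g1 r1 a1] u [g2 r2 a2]] /=.
- split.
  + by move=> m gm; apply: mgood_lmul.
  + by move=> m n gm gn E; apply: mlmul_resp.
  + by move=> m n gm gn; apply: mlmul_add.
- have Ts := HST s Ss. split.
  + by move=> m gm; apply: mgood_inv.
  + move=> m n gm gn E; exact (minv_resp H Ts gm gn E).
  + move=> m n gm gn; exact (minv_add H Ts gm gn).
- split.
  + move=> m gm; exact: (oT1 H).
  + move=> m n gm gn E; apply: (meqv_refl H); exact: (oT1 H).
  + move=> m n gm gn; apply: meqv_sym.
    apply: (meqv_trans H (n := (1, 1 * 0 + 1 * 0))); first exact: (oT1 H).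
      apply: (madd_spec H) => //=; rewrite ?mulr1 //; exact: (oT1 H).
    rewrite mulr0 addr0. apply: (meqv_refl H). exact: (oT1 H).
- split.
  + by [].
  + by [].
  + move=> m n gm gn; apply: (meqv_refl H). exact: mgood_add.
- split.
  + move=> m gm; apply: mgood_add => //; [exact: g1 | exact: g2].
  + move=> m n gm gn E; apply: (madd_resp H); auto.
  + move=> m n gm gn.
    have gtm := g1 m gm; have gtn := g1 n gn; have gum := g2 m gm; have gun := g2 n gn.
    have gmn := mgood_add H gm gn.
    have gtmn := g1 _ gmn; have gumn := g2 _ gmn.
    have gA := mgood_add H gtm gtn; have gB := mgood_add H gum gun.
    have gtu_m := mgood_add H gtm gum; have gtu_n := mgood_add H gtn gun.
    apply: (meqv_trans H (mgood_add H gA gB)).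
      exact (madd_resp H gtmn gA gumn gB (a1 m n gm gn) (a2 m n gm gn)).
    apply: (meqv_trans H (mgood_add H gtm (mgood_add H gtn gB)) (madd_assoc H gtm gtn gB)).
    apply: meqv_sym.
    apply: (meqv_trans H (mgood_add H gtm (mgood_add H gum gtu_n)) (madd_assoc H gtm gum gtu_n)).
    apply: (madd_resp H gtm gtm _ _ (meqv_refl H gtm)).
    - exact (mgood_add H gum gtu_n).
    - exact (mgood_add H gtn gB).
    apply: (meqv_trans H (mgood_add H (mgood_add H gum gtn) gun) (meqv_sym (madd_assoc H gum gtn gun))).
    apply: meqv_sym.
    apply: (meqv_trans H (mgood_add H (mgood_add H gtn gum) gun) (meqv_sym (madd_assoc H gtn gum gun))).
    exact (madd_resp H (mgood_add H gtn gum) (mgood_add H gum gtn) gun gun (madd_comm H gtn gum) (meqv_refl H gun)).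
- split.
  + by move=> m gm; apply: g1.
  + move=> m n gm gn E; exact (mopp_resp H (g1 m gm) (g1 n gn) (r1 m n gm gn E)).
  + move=> m n gm gn.
    have gmn := mgood_add H gm gn.
    have gtm := g1 m gm; have gtn := g1 n gn.
    apply: (meqv_trans H (n := mopp (madd T (mint T pid t m) (mint T pid t n))) (mgood_add H gtm gtn)).
      exact (mopp_resp H (g1 _ gmn) (mgood_add H gtm gtn) (a1 m n gm gn)).
    exact (mopp_add H gtm gtn).
- split.
  + by move=> m gm; auto.
  + by move=> m n gm gn E; auto.
  + move=> m n gm gn.
    have gmn := mgood_add H gm gn.
    have gum := g2 m gm; have gun := g2 n gn.
    apply: (meqv_trans H (g1 _ (mgood_add H gum gun))).
      exact (r1 _ _ (g2 _ gmn) (mgood_add H gum gun) (a2 m n gm gn)).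
    exact (a1 _ _ gum gun).
Qed.

Lemma mint_sound (R A : pzRingType) (S : R -> Prop) (T : A -> Prop) (H : OreHyp T)
  (pid : {rmorphism R -> A}) (HST : forall s, S s -> T (pid s)) (t u : rterm S) :
  req t u -> forall m, mgood T m -> meqv (mint T pid t m) (mint T pid u m).
Proof.
have G := mint_good H HST.
elim => {t u} /=.
- move=> t m gm; apply: (meqv_refl H); by case: (G t) => g _ _; apply: g.
- by move=> t u _ IH m gm; apply: meqv_sym; apply: IH.
- move=> t u v _ IH1 _ IH2 m gm.
  case: (G u) => g _ _. exact (meqv_trans H (g m gm) (IH1 m gm) (IH2 m gm)).
- move=> t t' u u' _ IH1 _ IH2 m gm.
  case: (G t) => gt _ _; case: (G t') => gt' _ _; case: (G u) => gu _ _; case: (G u') => gu' _ _.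
  exact (madd_resp H (gt m gm) (gt' m gm) (gu m gm) (gu' m gm) (IH1 m gm) (IH2 m gm)).
- move=> t t' _ IH m gm.
  case: (G t) => gt _ _; case: (G t') => gt' _ _.
  exact (mopp_resp H (gt m gm) (gt' m gm) (IH m gm)).
- move=> t t' u u' _ IH1 _ IH2 m gm.
  case: (G t) => gt rt _; case: (G t') => gt' _ _; case: (G u) => gu _ _; case: (G u') => gu' _ _.
  apply: (meqv_trans H (gt _ (gu' m gm))).
    exact (rt _ _ (gu m gm) (gu' m gm) (IH2 m gm)).
  exact (IH1 _ (gu' m gm)).
- move=> t u v m gm.
  case: (G t) => gt _ _; case: (G u) => gu _ _; case: (G v) => gv _ _.
  exact (meqv_sym (madd_assoc H (gt m gm) (gu m gm) (gv m gm))).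
- move=> t u m gm.
  case: (G t) => gt _ _; case: (G u) => gu _ _.
  exact (madd_comm H (gt m gm) (gu m gm)).
- move=> t m gm. case: (G t) => gt _ _. exact (madd0 H (gt m gm)).
- move=> t m gm. case: (G t) => gt _ _. exact (maddN H (gt m gm)).
- move=> t u v m gm. case: (G (tMul t (tMul u v))) => g _ _. exact (meqv_refl H (g m gm)).
- move=> t m gm. case: (G t) => g _ _. exact (meqv_refl H (g m gm)).
- move=> t m gm. case: (G t) => g _ _. exact (meqv_refl H (g m gm)).
- move=> t u v m gm. case: (G (tMul (tAdd t u) v)) => g _ _. exact (meqv_refl H (g m gm)).
- move=> t u v m gm. case: (G t) => _ _ a; case: (G u) => gu _ _; case: (G v) => gv _ _.
  exact (a _ _ (gu m gm) (gv m gm)).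
- move=> m gm. rewrite rmorph0. exact (mlmul0 H gm).
- move=> m gm. rewrite rmorph1. exact (mlmul1 H gm).
- move=> a b m gm. rewrite rmorphD. exact (mlmulD H (a:=pid a) (b:=pid b) gm).
- move=> a m gm. rewrite rmorphN. exact (mlmulN H (a:=pid a) gm).
- move=> a b m gm. rewrite rmorphM. exact (mlmulM H (a:=pid a) (b:=pid b) gm).
- move=> [s Ss] m gm /=. exact (mlmul_inv H (HST s Ss) gm).
- move=> [s Ss] m gm /=. exact (minv_lmul H (HST s Ss) gm).
Qed.

Lemma model_kernel (R A : pzRingType) (S : R -> Prop) (T : A -> Prop) (H : OreHyp T)
  (pid : {rmorphism R -> A}) (HST : forall s, S s -> T (pid s)) (r : R) :
  req (tC r : rterm S) t0 -> pid r = 0.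
Proof.
move=> E.
have := mint_sound H HST E (m := (1, 1)) (oT1 H).
rewrite /= /mlmul /=.
have [Tp Ep] := oref_spec H (pid r) (oT1 H).
set p := oref T (pid r) 1 in Tp Ep *.
move=> Eq.
have E2 : p.2 = 0.
  move: (Eq 1 p.1). rewrite /= mul1r mulr1 mulr1 mulr0 mul1r. by apply.
apply: (oL H Tp). by rewrite Ep E2 mulr0 mul0r.
Qed.


Lemma den_img (R A : pzRingType) (S : R -> Prop) (k : R -> Prop) (p : {rmorphism R -> A}) :
  surj p -> (forall r, p r = 0 <-> k r) -> mult_set S ->
  (forall s, S s -> ~ k s) ->
  (forall r s, S s -> exists s' r', S s' /\ k (s' * r - r' * s)) ->
  (forall s r, S s -> k (s * r) -> k r) ->
  (forall s r, S s -> k (r * s) -> k r) ->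
  left_den (img p S) /\ (forall s, img p S s -> GRing.lreg s /\ GRing.rreg s).
Proof.
move=> ps pk [SM S1 S0] nk Ore cl cr.
have reg : forall s, img p S s -> GRing.lreg s /\ GRing.rreg s.
  move=> _ [s [Ss <-]]; split.
  - move=> x y; have [x' <-] := ps x; have [y' <-] := ps y => E.
    apply/eqP; rewrite -subr_eq0 -rmorphB; apply/eqP; apply/pk.
    apply: (cl s) => //; apply/pk. by rewrite rmorphM rmorphB mulrBr E subrr.
  - move=> x y; have [x' <-] := ps x; have [y' <-] := ps y => /= E.
    apply/eqP; rewrite -subr_eq0 -rmorphB; apply/eqP; apply/pk.
    apply: (cr s) => //; apply/pk. by rewrite rmorphM rmorphB mulrBl E subrr.
split => //; split; [split; [split|] | ].
- move=> _ _ [x [Sx <-]] [y [Sy <-]]. exists (x * y); split; [exact: SM | exact: rmorphM].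
- exists 1; split => //; exact: rmorph1.
- move=> [x [Sx /pk Kx]]. exact: (nk x).
- move=> r _ [s [Ss <-]]. have [r0 <-] := ps r.
  have [s' [r' [Ss' K]]] := Ore r0 s Ss.
  exists (p s'), (p r'); split; first by exists s'.
  apply/eqP; rewrite -subr_eq0 -!rmorphM -rmorphB; apply/eqP; exact/pk.
- move=> r s Ts E. exists 1; split; first by exists 1; split => //; exact: rmorph1.
  have [_ rg] := reg s Ts. rewrite mul1r. apply: rg. by rewrite E mul0r.
Qed.

Lemma den_img_r (R A : pzRingType) (S : R -> Prop) (k : R -> Prop) (p : {rmorphism R -> A}) :
  surj p -> (forall r, p r = 0 <-> k r) -> mult_set S ->
  (forall s, S s -> ~ k s) ->
  (forall r s, S s -> exists s' r', S s' /\ k (r * s' - s * r')) ->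
  (forall s r, S s -> k (s * r) -> k r) ->
  (forall s r, S s -> k (r * s) -> k r) ->
  right_den (img p S).
Proof.
move=> ps pk [SM S1 S0] nk Ore cl cr.
split; [split; [split|] | ].
- move=> _ _ [x [Sx <-]] [y [Sy <-]]. exists (x * y); split; [exact: SM | exact: rmorphM].
- exists 1; split => //; exact: rmorph1.
- move=> [x [Sx /pk Kx]]. exact: (nk x).
- move=> r _ [s [Ss <-]]. have [r0 <-] := ps r.
  have [s' [r' [Ss' K]]] := Ore r0 s Ss.
  exists (p s'), (p r'); split; first by exists s'.
  apply/eqP; rewrite -subr_eq0 -!rmorphM -rmorphB; apply/eqP; exact/pk.
- move=> r _ [s [Ss <-]] E. exists 1; split; first by exists 1; split => //; exact: rmorph1.
  rewrite mulr1. have [r0 Er] := ps r. move: E; rewrite -Er => E.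
  apply/pk. apply: (cl s) => //. apply/pk. by rewrite rmorphM.
Qed.

Lemma comp_rmorph (A B C : pzRingType) (f : {rmorphism A -> B}) (g : {rmorphism B -> C}) :
  exists h : {rmorphism A -> C}, forall x, h x = g (f x).
Proof.
apply: mk_rmorph; split.
- by rewrite !rmorph0.
- by move=> x y; rewrite !rmorphD.
- by rewrite !rmorph1.
- by move=> x y; rewrite !rmorphM.
Qed.

Lemma inj_surj_bij (A B : Type) (x0 : A) (f : A -> B) :
  injective f -> (forall y, exists x, f x = y) -> bijective f.
Proof.
move=> fi fs.
pose g y := epsilon (inhabits x0) (fun x => f x = y).
have gP y : f (g y) = y by rewrite /g; apply: (epsilon_spec (inhabits x0) (fun x => f x = y)); apply: fs.
exists g => x; [apply: fi; exact: gP | exact: gP].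
Qed.

Lemma Den_left (st : lstar) (A : pzRingType) (T : A -> Prop) :
  Den st T -> left_den T /\ (forall s, T s -> GRing.lreg s /\ GRing.rreg s).
Proof. by case: st => [[]|[[]]]. Qed.


Unset Implicit Arguments. Set Strict Implicit.

Theorem theorem1p3 (R : pzRingType) (st : lstar) (S : R -> Prop) (a : R -> Prop)
  (HS : in_L st S a)
  (Rb : pzRingType) (pi : {rmorphism R -> Rb})
  (pi_surj : surj pi) (pi_ker : forall r, pi r = 0 <-> a r) :
  let Sb := img pi S in
  (* (1) *)
  Den st Sb /\
  (* (2) R<S^-1> is R-isomorphic to Sb^-1 Rb *)
  (forall (Q1 : pzRingType) (s1 : {rmorphism Rb -> Q1}),
     left_fractions Sb s1 ->
     exists g : rterm S -> Q1, uloc_R_iso (fun r => s1 (pi r)) g) /\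
  (* (3) *)
  (forall (b : R -> Prop), ideal_of b ->
   forall (Rd : pzRingType) (pid : {rmorphism R -> Rd}),
     surj pid -> (forall r, pid r = 0 <-> b r) ->
     Den st (img pid S) ->
     (forall r, a r -> b r) /\
     (forall (Q1 : pzRingType) (s1 : {rmorphism Rb -> Q1}),
        left_fractions Sb s1 ->
      forall (Q2 : pzRingType) (s2 : {rmorphism Rd -> Q2}),
        left_fractions (img pid S) s2 ->
        exists phi : {rmorphism Q1 -> Q2},
          [/\ forall (s r : R) (u : Q1) (v : Q2), S s ->
                is_inverse u (s1 (pi s)) -> is_inverse v (s2 (pid s)) ->
                phi (u * s1 (pi r)) = v * s2 (pid r),
              surj phi
            & forall q, phi q = 0 <->
                exists (s bb : R) (u : Q1),
                  [/\ S s, b bb, is_inverse u (s1 (pi s)) & q = u * s1 (pi bb)]])) /\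
  (* (3), last sentence: a is the least such ideal *)
  (ideal_of a /\
   forall (c : R -> Prop), ideal_of c ->
   forall (Rc : pzRingType) (pic : {rmorphism R -> Rc}),
     surj pic -> (forall r, pic r = 0 <-> c r) ->
     Den st (img pic S) -> forall r, a r -> c r) /\
  (* (4) *)
  (forall (Q : nzRingType) (f : {rmorphism R -> Q}),
     (forall s, S s -> exists v, is_inverse v (f s)) ->
     ring_generated_by
       (fun q : Q => (exists r, q = f r) \/ (exists s, S s /\ is_inverse q (f s))) ->
     (* (4a) *)
     ((forall r, a r -> f r = 0) /\
      (forall (Q1 : pzRingType) (s1 : {rmorphism Rb -> Q1}),
         left_fractions Sb s1 ->
         exists phi : {rmorphism Q1 -> Q},
           [/\ forall (s r : R) (u : Q1) (v : Q), S s ->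
                 is_inverse u (s1 (pi s)) -> is_inverse v (f s) ->
                 phi (u * s1 (pi r)) = v * f r,
               surj phi
             & forall q, phi q = 0 <->
                 exists (s k : R) (u : Q1),
                   [/\ S s, f k = 0, is_inverse u (s1 (pi s)) & q = u * s1 (pi k)]]) /\
      (forall q : Q, exists (s r : R) (v : Q),
         [/\ S s, is_inverse v (f s) & q = v * f r])) /\
     (* (4b) *)
     (forall (Rt : pzRingType) (pit : {rmorphism R -> Rt}),
        surj pit -> (forall r, pit r = 0 <-> f r = 0) ->
        Den star_l (img pit S) /\
        (forall (Q2 : pzRingType) (s2 : {rmorphism Rt -> Q2}),
           left_fractions (img pit S) s2 ->
           exists psi : {rmorphism Q2 -> Q},
             bijective psi /\ forall r, psi (s2 (pit r)) = f r))).
Proof.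
move=> Sb.
case: HS => HL Ha.
have LL : left_localizable S by case: st HL => //= [[]].
have [MS NZ Loc] := LL.
have [SM S1 S0] := MS.
have OreL := ore_l LL.
have piK : forall r, pi r = 0 <-> ass S r.
  move=> r; split; [by move/pi_ker/Ha | by move/Ha/pi_ker].
have nS : forall s, S s -> ~ ass S s := fun s => ass_notS NZ (s := s).
have clS : forall s r, S s -> ass S (s * r) -> ass S r := fun s r => @ass_mulS R S s r.
have crS : forall s r, S s -> ass S (r * s) -> ass S r := fun s r => @ass_mulSr R S s r.
have [LDb Regb] := den_img pi_surj piK MS nS OreL clS crS.
have D1 : Den st Sb.
  split => //. case: st HL => //= [[_ RL]].
  split => //. apply: (den_img_r pi_surj piK MS nS (ore_r RL) clS crS).
have LOb : left_ore Sb by case: LDb.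
have sub_b : forall (b : R -> Prop) (Rd : pzRingType) (pid : {rmorphism R -> Rd}),
    (forall r, pid r = 0 <-> b r) -> Den st (img pid S) -> forall r, a r -> b r.
  move=> b Rd pid pk /Den_left [LD Regd] r /Ha Ar.
  have [[[TM T1 T0] Ore] _] := LD.
  have H : OreHyp (img pid S).
    split => //.
    - by move=> s /Regd [].
    - by move=> s /Regd [].
  apply/pk. apply: (model_kernel H _ Ar).
  by move=> s Ss; exists s.
split; first exact: D1.
split.
  move=> Q1 s1 [LF1 LF2 LF3].
  have [g0 Hg0] := comp_rmorph pi s1.
  pose iv r := inv_of (g0 r).
  have Hiv : forall s, S s -> is_inverse (iv s) (g0 s).
    move=> s Ss; apply: inv_ofP. rewrite Hg0. apply: LF1. by exists s.
  exists (ev g0 iv); split.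
  - move=> t u; split; first exact: ev_sound.
    move=> E. have [[s Hs] [r Er]] := Loc (tAdd t (tOpp u)).
    have Ev := ev_sound Hiv Er. rewrite /= E subrr in Ev.
    have g0r : g0 r = 0.
      have [_ h2] := Hiv s Hs.
      by rewrite -(mul1r (g0 r)) -h2 -mulrA -Ev mulr0.
    move: g0r; rewrite Hg0 => /LF3 [_ [[s' [Ss' <-]] E']].
    have Ar : ass S r.
      apply: (clS s') => //; apply/piK. by rewrite rmorphM.
    apply: req_sub0. apply: (req_trans Er).
    apply: (req_trans (req_mul (req_refl _) Ar)). exact: req_mulr0.
  - move=> q; have [t' [a' [u [[s [Ss <-]] Hu ->]]]] := LF2 q.
    have [r <-] := pi_surj a'.
    exists (tMul (tX (exist S s Ss)) (tC r)) => /=.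
    rewrite Hg0; congr (_ * _). apply: (inv_uniq (Hiv s Ss)). by rewrite Hg0.
  - by [].
  - by [].
  - by move=> r /=.
split.
  move=> b Ib Rd pid pid_surj pidK Dd.
  have subab := sub_b b Rd pid pidK Dd.
  split; first exact: subab.
  move=> Q1 s1 LF Q2 s2 LG.
  have [LF1 LF2 LF3] := LF. have [LG1 LG2 LG3] := LG.
  have [_ Regd] := Den_left Dd.
  have [g0 Hg0] := comp_rmorph pid s2.
  have [h Hh] : exists h : {rmorphism Rb -> Q2}, forall r, h (pi r) = g0 r.
    apply: induced => // r /pi_ker Ar. by rewrite Hg0 (proj2 (pidK r) (subab r Ar)) rmorph0.
  have Hu : forall t, Sb t -> exists v, is_inverse v (h t).
    move=> _ [s [Ss <-]]. rewrite Hh Hg0. apply: LG1. by exists s.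
  have [phi Hphi] := UP LOb LF Hu.
  have Hf : forall s r u v, S s -> is_inverse u (s1 (pi s)) -> is_inverse v (s2 (pid s)) ->
      phi (u * s1 (pi r)) = v * s2 (pid r).
    move=> s r u v Ss Hu' Hv.
    have Hv' : is_inverse v (h (pi s)) by rewrite Hh Hg0.
    have Ts : Sb (pi s) by exists s.
    by rewrite (Hphi (pi s) (pi r) u v Ts Hu' Hv') Hh Hg0.
  exists phi; split.
  - exact: Hf.
  - move=> q; have [_ [a' [v [[s [Ss <-]] Hv ->]]]] := LG2 q.
    have [r <-] := pid_surj a'.
    have [u Hu'] := LF1 (pi s) (ex_intro _ s (conj Ss erefl)).
    exists (u * s1 (pi r)). exact: (Hf s r u v Ss Hu' Hv).
  - move=> q; split.
    + have [_ [a' [u [[s [Ss <-]] Hu' ->]]]] := LF2 q.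
      have [r <-] := pi_surj a'.
      have [v Hv] := LG1 (pid s) (ex_intro _ s (conj Ss erefl)).
      rewrite (Hf s r u v Ss Hu' Hv) => E.
      have s2r : s2 (pid r) = 0.
        have [_ h2] := Hv. by rewrite -(mul1r (s2 _)) -h2 -mulrA E mulr0.
      have [_ [[s' [Ss' <-]] E']] := (proj1 (LG3 _)) s2r.
      have pr : pid r = 0.
        have [lr _] := Regd (pid s') (ex_intro _ s' (conj Ss' erefl)).
        apply: lr. by rewrite E' mulr0.
      exists s, r, u; split => //. exact/pidK.
    + move=> [s [bb [u [Ss Bb Hu' ->]]]].
      have [v Hv] := LG1 (pid s) (ex_intro _ s (conj Ss erefl)).
      by rewrite (Hf s bb u v Ss Hu' Hv) (proj2 (pidK bb) Bb) rmorph0 mulr0.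
split.
  split.
    have [I0 I1 I2] := ass_ideal S.
    split.
    - exact/Ha.
    - by move=> x y /Ha Ax /Ha Ay; apply/Ha; apply: I1.
    - by move=> r x /Ha Ax; split; apply/Ha; have [] := I2 r x Ax.
  move=> c Ic Rc pic _ picK Dc. exact: sub_b c Rc pic picK Dc.
move=> Q f Hf Hgen.
pose iv r := inv_of (f r).
have Hiv : forall s, S s -> is_inverse (iv s) (f s) by move=> s Ss; apply: inv_ofP; apply: Hf.
have fa : forall r, a r -> f r = 0.
  move=> r /Ha Ar. exact: (ev_sound Hiv Ar).
have fnz : forall s, S s -> ~ (f s = 0).
  move=> s Ss E. have [v [_ Hv]] := Hf s Ss. move: Hv; rewrite E mul0r => /esym/eqP.
  by rewrite oner_eq0.
have OreLf : forall r s, S s -> exists s' r', S s' /\ f (s' * r - r' * s) = 0.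
  move=> r s Ss. have [s' [r' [Ss' A]]] := OreL r s Ss.
  exists s', r'; split => //. apply: fa; exact/Ha.
have OreQ : forall r s, S s -> exists s' r', S s' /\ f s' * f r = f r' * f s.
  move=> r s Ss. have [s' [r' [Ss' E]]] := OreLf r s Ss.
  exists s', r'; split => //. apply/eqP; rewrite -subr_eq0 -!rmorphM -rmorphB; exact/eqP.
have clf : forall s r, S s -> f (s * r) = 0 -> f r = 0.
  move=> s r Ss; rewrite rmorphM => E. have [v [Hv1 _]] := Hf s Ss.
  by rewrite -(mul1r (f r)) -Hv1 -mulrA E mulr0.
have crf : forall s r, S s -> f (r * s) = 0 -> f r = 0.
  move=> s r Ss; rewrite rmorphM => E. have [v [_ Hv2]] := Hf s Ss.
  by rewrite -(mulr1 (f r)) -Hv2 mulrA E mul0r.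
have inv1f : is_inverse 1 (f 1) by rewrite rmorph1; apply: inv1.
have Qrep : forall q : Q, exists (s r : R) (v : Q), [/\ S s, is_inverse v (f s) & q = v * f r].
  apply: Hgen.
  - split.
    + exists 1, 0, 1; split => //. by rewrite rmorph0 mulr0.
    + exists 1, 1, 1; split => //. by rewrite rmorph1 mulr1.
    + move=> _ _ [s1' [r1 [v1 [Ss1 Hv1 ->]]]] [s2' [r2 [v2 [Ss2 Hv2 ->]]]].
      have [c [d [Sc Ecd]]] := OreQ s1' s2' Ss2.
      have Sw : S (c * s1') by apply: SM.
      have [W HW] := Hf _ Sw.
      have Wc : W * f c = v1.
        apply: (inv_mul (y := f s1')); [rewrite -rmorphM; case: HW | case: Hv1] => //.
      have Wd : W * f d = v2.
        apply: (inv_mul (y := f s2')); [rewrite -Ecd -rmorphM; case: HW | case: Hv2] => //.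
      exists (c * s1'), (c * r1 - d * r2), W; split => //.
      by rewrite rmorphB !rmorphM mulrBr !mulrA Wc Wd.
    + move=> _ _ [s1' [r1 [v1 [Ss1 Hv1 ->]]]] [s2' [r2 [v2 [Ss2 Hv2 ->]]]].
      have [c [d [Sc Ecd]]] := OreQ r1 s2' Ss2.
      have Sw : S (c * s1') by apply: SM.
      have [W HW] := Hf _ Sw.
      have Wd : W * f d = v1 * f r1 * v2.
        apply: (mulfrac (xc := f c) (xt2 := f s2') (xt1 := f s1')).
        - exact: Ecd.
        - by case: Hv2.
        - by rewrite -rmorphM; case: HW.
        - by case: Hv1.
      exists (c * s1'), (d * r2), W; split => //.
      by rewrite rmorphM [RHS]mulrA Wd !mulrA.
  - move=> q [[r ->] | [s [Ss Hq]]].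
    + exists 1, r, 1; split => //. by rewrite mul1r.
    + exists s, 1, q; split => //. by rewrite rmorph1 mulr1.
split.
  split; first exact: fa.
  split; last exact: Qrep.
  move=> Q1 s1 LF. have [LF1 LF2 LF3] := LF.
  have [h Hh] : exists h : {rmorphism Rb -> Q}, forall r, h (pi r) = f r.
    by apply: induced => // r /pi_ker /fa.
  have Hu : forall t, Sb t -> exists v, is_inverse v (h t).
    move=> _ [s [Ss <-]]. rewrite Hh. exact: Hf.
  have [phi Hphi] := UP LOb LF Hu.
  have Hf2 : forall s r u v, S s -> is_inverse u (s1 (pi s)) -> is_inverse v (f s) ->
      phi (u * s1 (pi r)) = v * f r.
    move=> s r u v Ss Hu' Hv.
    have Hv' : is_inverse v (h (pi s)) by rewrite Hh.
    have Ts : Sb (pi s) by exists s.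
    by rewrite (Hphi (pi s) (pi r) u v Ts Hu' Hv') Hh.
  exists phi; split.
  - exact: Hf2.
  - move=> q; have [s [r [v [Ss Hv ->]]]] := Qrep q.
    have [u Hu'] := LF1 (pi s) (ex_intro _ s (conj Ss erefl)).
    exists (u * s1 (pi r)). exact: (Hf2 s r u v Ss Hu' Hv).
  - move=> q; split.
    + have [_ [a' [u [[s [Ss <-]] Hu' ->]]]] := LF2 q.
      have [r <-] := pi_surj a'.
      have [v Hv] := Hf s Ss.
      rewrite (Hf2 s r u v Ss Hu' Hv) => E.
      have fr : f r = 0.
        have [_ h2] := Hv. by rewrite -(mul1r (f r)) -h2 -mulrA E mulr0.
      by exists s, r, u.
    + move=> [s [k [u [Ss fk Hu' ->]]]].
      have [v Hv] := Hf s Ss.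
      by rewrite (Hf2 s k u v Ss Hu' Hv) fk mulr0.
move=> Rt pit pit_surj pitK.
have [LDt Regt] := den_img pit_surj pitK MS fnz OreLf clf crf.
split; first by split.
move=> Q2 s2 LG. have [LG1 LG2 LG3] := LG.
have [h Hh] : exists h : {rmorphism Rt -> Q}, forall r, h (pit r) = f r.
  by apply: induced => // r /pitK.
have Hu : forall t, img pit S t -> exists v, is_inverse v (h t).
  move=> _ [s [Ss <-]]. rewrite Hh. exact: Hf.
have LOt : left_ore (img pit S) by case: LDt.
have [psi Hpsi] := UP LOt LG Hu.
have Hf3 : forall s r u v, S s -> is_inverse u (s2 (pit s)) -> is_inverse v (f s) ->
    psi (u * s2 (pit r)) = v * f r.
  move=> s r u v Ss Hu' Hv.
  have Hv' : is_inverse v (h (pit s)) by rewrite Hh.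
  have Ts : img pit S (pit s) by exists s.
  by rewrite (Hpsi (pit s) (pit r) u v Ts Hu' Hv') Hh.
exists psi; split.
- apply: (inj_surj_bij 0).
  + move=> x y E. apply/eqP; rewrite -subr_eq0; apply/eqP.
    have [_ [a' [u [[s [Ss <-]] Hu' Eq]]]] := LG2 (x - y).
    have [r Er] := pit_surj a'. subst a'.
    have [v Hv] := Hf s Ss.
    have : psi (x - y) = 0 by rewrite rmorphB E subrr.
    rewrite Eq (Hf3 s r u v Ss Hu' Hv) => E2.
    have fr : f r = 0.
      have [_ h2] := Hv. by rewrite -(mul1r (f r)) -h2 -mulrA E2 mulr0.
    by rewrite (proj2 (pitK r) fr) rmorph0 mulr0.
  + move=> q; have [s [r [v [Ss Hv ->]]]] := Qrep q.
    have [u Hu'] := LG1 (pit s) (ex_intro _ s (conj Ss erefl)).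
    exists (u * s2 (pit r)). exact: (Hf3 s r u v Ss Hu' Hv).
- move=> r.
  have H1 : is_inverse 1 (s2 (pit 1)) by rewrite !rmorph1; apply: inv1.
  by rewrite -(mul1r (s2 (pit r))) (Hf3 1 r 1 1 S1 H1 inv1f) mul1r.
Qed.
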